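(* Let $\omega\in\Omega_+$ satisfy \[\liminf_{i\to\infty}\frac1i\sum_{y=-i}^{0}(2\omega(y,1)-1)>0.\] Then for all $x,k\in\mathbb Z$ with $k\ge x$, $E_{x,\omega}[D_{T_k}]=k-x$.
   Context: Cookie environments: $\Omega_+=([1/2,1]^{\mathbb N})^{\mathbb Z}$, $\omega=(\omega(z,i))_{z\in\mathbb Z,i\ge1}$. $P_{x,\omega}$ is the law of the nearest-neighbor process $(X_n)_{n\ge0}$ with $X_0=x$ which, on its $i$-th visit to site $z$, jumps to $z+1$ with probability $\omega(z,i)$ and to $z-1$ otherwise (independently of everything else given the history); $E_{x,\omega}$ its expectation. $T_k=\inf\{n\ge0:X_n=k\}$. For a site $z$ and time $n$, $D_n^z=\sum_{i=1}^{\#\{m<n: X_m=z\}}(2\omega(z,i)-1)$ (drift of cookies eaten at $z$ before time $n$); $D_n^+=\sum_{z\ge0}D_n^z$, $D_n^-=\sum_{z<0}D_n^z$, $D_n=D_n^++D_n^-$. *)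

(* Defs.v *)
From HB Require Import structures.
From mathcomp Require Import all_boot all_order all_algebra.
From mathcomp Require Import all_classical all_reals all_analysis.
Set Implicit Arguments. Unset Strict Implicit. Unset Printing Implicit Defensive.
Import Order.TTheory GRing.Theory Num.Theory.
Local Open Scope classical_set_scope.
Local Open Scope ring_scope.

Section Cookies.
Variable R : realType.

(* A cookie environment: omega z i = strength of the i-th cookie (i >= 1) at z. *)
Definition in_Omega_plus (omega : int -> nat -> R) : Prop :=
  forall (z : int) (i : nat), (1 <= i)%N -> 2^-1 <= omega z i <= 1.

(* History of the walk (X_0, ..., X_n), driven by the uniform variables u:
   at time m, if X_m = z is the i-th visit to z (counting time m), the walk
   jumps to z+1 iff u m < omega z i, and to z-1 otherwise. *)
Fixpoint walk_hist (omega : int -> nat -> R) (x : int) (u : nat -> R) (n : nat)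
  : seq int :=
  match n with
  | 0 => [:: x]
  | m.+1 =>
      let h := walk_hist omega x u m in
      let z := last x h in
      let i := count (pred1 z) h in
      rcons h (if u m < omega z i then z + 1 else z - 1)
  end.

Definition walk (omega : int -> nat -> R) (x : int) (u : nat -> R) (n : nat) : int :=
  last x (walk_hist omega x u n).

Definition nvisits (X : nat -> int) (z : int) (n : nat) : nat :=
  \sum_(0 <= m < n) (X m == z).

Definition Dsite (omega : int -> nat -> R) (X : nat -> int) (z : int) (n : nat) : R :=
  \sum_(1 <= i < (nvisits X z n).+1) (2 * omega z i - 1).

(* D_n = sum over all sites z of D_n^z; only the sites visited before time n
   contribute (D_n^z = 0 otherwise), so the sum is over them. *)
Definition Dtot (omega : int -> nat -> R) (X : nat -> int) (n : nat) : R :=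
  \sum_(z <- undup [seq X m | m <- iota 0 n]) Dsite omega X z n.

(* T_k = inf {n : X_n = k}, None if the set is empty (T_k = +infinity). *)
Definition hitting (X : nat -> int) (k : int) : option nat :=
  match pselect (exists n, X n == k) with
  | left h => Some (ex_minn h)
  | right _ => None
  end.

(* D_{T_k}, with the convention D_{T_k} = D_infinity = sup_n D_n (the
   nondecreasing limit) on {T_k = infinity}. *)
Definition D_at_hit (omega : int -> nat -> R) (X : nat -> int) (k : int) : \bar R :=
  match hitting X k with
  | Some n => (Dtot omega X n)%:E
  | None => ereal_sup (range (fun n => (Dtot omega X n)%:E))
  end.

End Cookies.

Definition iid_uniform (d : measure_display) (T : measurableType d) (R : realType)
  (P : probability T R) (U : nat -> T -> R) : Prop :=
  [/\ (forall n, measurable_fun setT (U n)),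
      (forall n (a : R), 0 <= a <= 1 -> P [set t | U n t <= a] = a%:E) &
      (forall (s : seq nat) (B : nat -> set R), uniq s ->
         (forall i, measurable (B i)) ->
         P (\bigcap_(i in [set` s]) (U i @^-1` B i)) =
         (\prod_(i <- s) P (U i @^-1` B i))%E)].

(* Main.v *)
Require Import Defs.
From HB Require Import structures.
From mathcomp Require Import all_boot all_order all_algebra.
From mathcomp Require Import all_classical all_reals all_analysis.
Import Order.TTheory GRing.Theory Num.Theory.
Local Open Scope classical_set_scope.
Local Open Scope ring_scope.
Set Implicit Arguments. Unset Strict Implicit. Unset Printing Implicit Defensive.
From mathcomp Require Import lra zify ring.

Section Det.
Variable R : realType.
Variable omega : int -> nat -> R.
Hypothesis Hom : in_Omega_plus omega.
Variable x : int.

Definition wat (h : seq int) : R := omega (last x h) (count (pred1 (last x h)) h).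
Definition ub (b : nat -> bool) : nat -> R := fun m => if b m then 0 else 2.
Definition cu (u : nat -> R) (m : nat) : bool := u m < wat (walk_hist omega x u m).

Lemma hist_head u n : exists s, walk_hist omega x u n = x :: s.
Proof.
elim: n => [|n [s IH]]; first by exists [::].
by exists (rcons s (if u n < wat (walk_hist omega x u n) then last x (walk_hist omega x u n) + 1
   else last x (walk_hist omega x u n) - 1)); rewrite /= IH.
Qed.

Lemma wat_range u n : 2^-1 <= wat (walk_hist omega x u n) <= 1.
Proof.
rewrite /wat; apply: Hom; have [s ->] := hist_head u n.
rewrite -has_count has_pred1 /=; exact: (mem_last x s).
Qed.

Lemma histS u n : walk_hist omega x u n.+1 =
  rcons (walk_hist omega x u n)
   (if u n < wat (walk_hist omega x u n) then walk omega x u n + 1 else walk omega x u n - 1).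
Proof. by []. Qed.

Lemma walkS u n : walk omega x u n.+1 =
  if u n < wat (walk_hist omega x u n) then walk omega x u n + 1 else walk omega x u n - 1.
Proof. by rewrite /walk histS last_rcons. Qed.

Lemma walk0 u : walk omega x u 0 = x.
Proof. by []. Qed.

Lemma hist_map u n : walk_hist omega x u n = [seq walk omega x u m | m <- iota 0 n.+1].
Proof.
elim: n => [//|n IH].
have -> : iota 0 n.+2 = iota 0 n.+1 ++ [:: n.+1] by rewrite -addn1 iotaD.
by rewrite histS -walkS IH map_cat cats1.
Qed.

Lemma ub_lt b m h : 2^-1 <= wat h <= 1 -> (ub b m < wat h) = b m.
Proof.
move=> /andP[h1 h2]; rewrite /ub; case: (b m).
  by apply: lt_le_trans h1; rewrite invr_gt0 ltr0n.
by apply/negbTE; rewrite -leNgt; apply: le_trans h2 _; rewrite ler1n.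
Qed.

Lemma hist_dep b b' n : (forall m, (m < n)%N -> b m = b' m) ->
  walk_hist omega x (ub b) n = walk_hist omega x (ub b') n.
Proof.
elim: n => [//|n IH] H.
rewrite !histS /walk IH; last by move=> m mn; apply: H; exact: ltnW.
rewrite !ub_lt ?wat_range // H //.
Qed.

Lemma walk_dep b b' n : (forall m, (m < n)%N -> b m = b' m) ->
  walk omega x (ub b) n = walk omega x (ub b') n.
Proof. by move=> H; rewrite /walk (hist_dep H). Qed.

Lemma hist_cu u n : walk_hist omega x u n = walk_hist omega x (ub (cu u)) n.
Proof.
elim: n => [//|n IH].
by rewrite !histS /walk -IH ub_lt ?wat_range.
Qed.

Lemma walk_cu u : walk omega x u = walk omega x (ub (cu u)).
Proof. by apply: funext => n; rewrite /walk hist_cu. Qed.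


Section Dt.
Variable X : nat -> int.

Lemma nvisitsS z n : nvisits X z n.+1 = (nvisits X z n + (X n == z))%N.
Proof. by rewrite /nvisits big_nat_recr. Qed.

Lemma iotaS0 n : iota 0 n.+1 = iota 0 n ++ [:: n].
Proof. by rewrite -addn1 iotaD. Qed.

Lemma nvisits_pos z n : (0 < nvisits X z n)%N = (z \in [seq X m | m <- iota 0 n]).
Proof.
elim: n => [|n IH]; first by rewrite /nvisits big_geq.
rewrite nvisitsS iotaS0 map_cat mem_cat addn_gt0 IH inE; congr (_ || _).
by rewrite eq_sym; case: eqP.
Qed.

Lemma DsiteS z n : Dsite omega X z n.+1 =
  Dsite omega X z n + (X n == z)%:R * (2 * omega z (nvisits X z n).+1 - 1).
Proof.
rewrite /Dsite nvisitsS; case: eqP => [_|_].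
  by rewrite addn1 big_nat_recr //= mul1r.
by rewrite addn0 mul0r addr0.
Qed.

Lemma sub_sum (s1 s2 : seq int) (g : int -> R) : uniq s1 -> uniq s2 ->
  {subset s1 <= s2} -> (forall z, 0 <= g z) ->
  \sum_(z <- s1) g z <= \sum_(z <- s2) g z.
Proof.
move=> u1 u2 sub g0.
rewrite [X in _ <= X](bigID (mem s1)) /=.
have -> : \sum_(i <- s2 | i \in s1) g i = \sum_(i <- s1) g i.
  rewrite -big_filter; apply: perm_big; apply: uniq_perm.
  - exact: filter_uniq.
  - exact: u1.
  move=> z; rewrite mem_filter; case zs1: (z \in s1) => //=; exact: sub zs1.
by rewrite lerDl sumr_ge0.
Qed.

Lemma Dtot_seq n (s : seq int) : uniq s -> {subset [seq X m | m <- iota 0 n] <= s} ->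
  Dtot omega X n = \sum_(z <- s) Dsite omega X z n.
Proof.
move=> us sub.
rewrite [RHS](bigID (mem (undup [seq X m | m <- iota 0 n]))) /=.
rewrite [X in _ + X]big1 ?addr0; last first.
  move=> z; rewrite mem_undup -nvisits_pos lt0n negbK => /eqP H.
  by rewrite /Dsite H big_geq.
rewrite -big_filter /Dtot; apply: perm_big; apply: uniq_perm.
- exact: undup_uniq.
- exact: filter_uniq.
move=> z; rewrite mem_filter; case zV: (z \in undup _) => //=.
by symmetry; apply: sub; move: zV; rewrite mem_undup.
Qed.

Definition dr m : R := 2 * omega (X m) (nvisits X (X m) m).+1 - 1.

Lemma DtotS n : Dtot omega X n.+1 = Dtot omega X n + dr n.
Proof.
rewrite {1}/Dtot.
have sub : {subset [seq X m | m <- iota 0 n] <= undup [seq X m | m <- iota 0 n.+1]}.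
  by move=> z; rewrite mem_undup iotaS0 map_cat mem_cat => ->.
have Xs : X n \in undup [seq X m | m <- iota 0 n.+1].
  by rewrite mem_undup iotaS0 map_cat mem_cat inE eqxx orbT.
rewrite (@Dtot_seq n _ (undup_uniq _) sub).
move: (undup_uniq [seq X m | m <- iota 0 n.+1]) Xs.
move: (undup [seq X m | m <- iota 0 n.+1]) => s us Xs.
under eq_bigr do rewrite DsiteS.
rewrite big_split; congr (_ + _).
rewrite (bigD1_seq (X n)) //= eqxx mul1r big1 ?addr0 // => z /negbTE; rewrite eq_sym => ->.
by rewrite mul0r.
Qed.

Lemma Dtot0 : Dtot omega X 0 = 0.
Proof. by rewrite /Dtot /= big_nil. Qed.

Lemma Dtot_sum n : Dtot omega X n = \sum_(0 <= m < n) dr m.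
Proof.
elim: n => [|n IH]; first by rewrite Dtot0 big_geq.
by rewrite DtotS IH big_nat_recr.
Qed.

Lemma dr_range m : 0 <= dr m <= 1.
Proof.
have /andP[h1 h2] := Hom (X m) (ltn0Sn (nvisits X (X m) m)).
rewrite /dr subr_ge0 lerBlDr; apply/andP; split.
  by rewrite -(ler_pM2l (ltr0n R 2)) in h1; move: h1; rewrite mulfV.
by rewrite (_ : 1 + 1 = 2 * 1) ?ler_pM2l // mulr1.
Qed.

Lemma Dtot_ge0 n : 0 <= Dtot omega X n.
Proof. by rewrite Dtot_sum sumr_ge0 // => m _; case/andP: (dr_range m). Qed.

Lemma Dtot_le n : Dtot omega X n <= n%:R.
Proof.
elim: n => [|n IH]; first by rewrite Dtot0.
rewrite DtotS -natr1 lerD //; by case/andP: (dr_range n).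
Qed.

Lemma Dtot_mono m n : (m <= n)%N -> Dtot omega X m <= Dtot omega X n.
Proof.
move/subnK <-; elim: (n - m)%N => [|j IH]; first by rewrite add0n.
rewrite addSn DtotS; apply: le_trans IH _; rewrite lerDl; by case/andP: (dr_range (j + m)).
Qed.

Lemma Dsite_ge0 z n : 0 <= Dsite omega X z n.
Proof.
rewrite /Dsite big_nat_cond sumr_ge0 // => i /andP[/andP[i1 _] _].
have /andP[h1 h2] := Hom z i1.
rewrite subr_ge0; rewrite -(ler_pM2l (ltr0n R 2)) in h1; move: h1; rewrite mulfV //.
Qed.

Lemma Dsite_first z n : z \in [seq X m | m <- iota 0 n] ->
  2 * omega z 1 - 1 <= Dsite omega X z n.
Proof.
rewrite -nvisits_pos => H; rewrite /Dsite big_ltn ?ltnS // lerDl.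
rewrite big_nat_cond sumr_ge0 // => i /andP[/andP[i1 _] _].
have /andP[h1 h2] := Hom z (ltnW i1).
rewrite subr_ge0; rewrite -(ler_pM2l (ltr0n R 2)) in h1; move: h1; rewrite mulfV //.
Qed.

End Dt.

Lemma Dtot_dep (X X' : nat -> int) n : (forall m, (m < n)%N -> X m = X' m) ->
  Dtot omega X n = Dtot omega X' n.
Proof.
move=> H; rewrite !Dtot_sum; apply: eq_big_nat => m /andP[_ mn].
rewrite /dr H //; congr (2 * omega _ _.+1 - 1).
by apply: eq_big_nat => j /andP[_ jm]; rewrite H // (ltn_trans jm mn).
Qed.

End Det.

Arguments ub {R} b m.

Definition hitn (X : nat -> int) (k : int) (n : nat) : nat :=
  find (fun m => X m == k) (iota 0 n).

Section Hit.
Variables (X : nat -> int) (k : int).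

Lemma hitn_le n : (hitn X k n <= n)%N.
Proof. by have := find_size (fun m => X m == k) (iota 0 n); rewrite size_iota. Qed.

Lemma hitn_hit n : (hitn X k n < n)%N -> X (hitn X k n) = k.
Proof.
move=> H; apply/eqP.
have hs : has (fun m => X m == k) (iota 0 n) by rewrite has_find size_iota.
by have := nth_find 0%N hs; rewrite -/(hitn X k n) nth_iota.
Qed.

Lemma hitn_before n m : (m < hitn X k n)%N -> X m != k.
Proof.
move=> H; have := before_find 0%N H; rewrite nth_iota ?add0n => [->//|].
exact: leq_trans H (hitn_le n).
Qed.

Lemma hitn_S n : hitn X k n.+1 =
  if (hitn X k n < n)%N then hitn X k n else if X n == k then n else n.+1.
Proof.
rewrite /hitn iotaS0 find_cat has_find size_iota /=.
case: ifP => // _; case: (X n == k) => /=; lia.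
Qed.

Lemma hitn_full n : (forall m, (m < n)%N -> X m != k) -> hitn X k n = n.
Proof.
elim: n => [//|n IH] H; rewrite hitn_S IH ?ltnn ?(negbTE (H n (ltnSn n))) // => m mn.
by apply: H; apply: ltnW.
Qed.

Lemma hitn_min m n : X m = k -> (forall j, (j < m)%N -> X j != k) -> hitn X k n = minn m n.
Proof.
move=> Xm bef; elim: n => [|n IH]; first by rewrite /hitn /= minn0.
rewrite hitn_S IH.
case: (ltnP m n) => mn.
  by rewrite mn; lia.
rewrite ltnn; case: eqP => Xn.
  have nm : n = m.
    case: (ltnP n m) => nm'; last by lia.
    by move: (bef n nm'); rewrite Xn eqxx.
  rewrite nm; lia.
have nm : (n < m)%N.
  case: (ltnP n m) => // nm'; have e : n = m by lia.
  by case: Xn; rewrite e.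
lia.
Qed.

Lemma hitn_dep (X' : nat -> int) n : (forall m, (m < n)%N -> X m = X' m) ->
  hitn X k n = hitn X' k n.
Proof.
move=> H; rewrite /hitn; apply: eq_in_find => m; rewrite mem_iota add0n => /andP[_ mn].
by rewrite /= H.
Qed.

End Hit.

Section NN.
Variables (X : nat -> int) (x : int).
Hypothesis X0 : X 0%N = x.
Hypothesis nn : forall n, X n.+1 = X n + 1 \/ X n.+1 = X n - 1.

Lemma ivt n z : X n < z -> z <= x -> z \in [seq X m | m <- iota 0 n].
Proof.
elim: n => [|n IH] H1 H2; first by move: H1; rewrite X0; lia.
rewrite iotaS0 map_cat mem_cat; case: (ltP (X n) z) => h.
  by rewrite IH.
apply/orP; right; rewrite inE; apply/eqP.
case: (nn n) => h'; move: H1; rewrite h'; lia.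
Qed.

Lemma below_k k n : x <= k -> (forall m, (m < n)%N -> X m != k) -> X n <= k.
Proof.
move=> xk; elim: n => [|n IH] H; first by rewrite X0.
have h1 : X n <= k by apply: IH => m mn; apply: H; apply: ltnW.
have h2 : X n != k by apply: H.
case: (nn n) => ->; lia.
Qed.

Lemma Xhit_le k n : x <= k -> X (hitn X k n) <= k.
Proof.
move=> xk; case: (ltnP (hitn X k n) n) => h.
  by rewrite hitn_hit.
have e : hitn X k n = n by apply/eqP; rewrite eqn_leq hitn_le.
rewrite e; apply: below_k => // m; rewrite -{1}e; exact: hitn_before.
Qed.

End NN.

Section Left.
Variable R : realType.
Variable omega : int -> nat -> R.
Hypothesis Hom : in_Omega_plus omega.
Variables (X : nat -> int) (x : int).
Hypothesis X0 : X 0%N = x.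
Hypothesis nn : forall n, X n.+1 = X n + 1 \/ X n.+1 = X n - 1.
Variables (c : R) (I : nat).
Hypothesis c0 : 0 < c.
Hypothesis Hc : forall i, (I <= i)%N ->
  c * i%:R <= \sum_(0 <= j < i.+1) (2 * omega (- (j%:Z)) 1%N - 1).

Let ax : R := (absz x)%:R.
Definition K1 : R := I%:R + 2 + (absz x)%:R + (absz x)%:R / c.

Lemma f_le1 z : 2 * omega z 1 - 1 <= 1.
Proof. have /andP[_ h] := Hom z (leqnn 1); lra. Qed.

Lemma int_natR (n : nat) : ((n%:Z)%:~R : R) = n%:R.
Proof. by []. Qed.

Lemma sum_le_D n (i : nat) : X n = - (i%:Z) - 1 ->
  \sum_(0 <= j < i.+1) (2 * omega (- (j%:Z)) 1%N - 1) <= ax + Dtot omega X n.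
Proof.
move=> Hy.
pose a := minn (absz x) i.+1.
rewrite (@big_cat_nat _ _ _ a) //=; last by rewrite geq_minr.
apply: lerD.
  apply: le_trans (_ : \sum_(0 <= j < a) (1 : R) <= _).
    by apply: ler_sum => j _; apply: f_le1.
  by rewrite sumr_const_nat subn0 /ax ler_nat geq_minl.
rewrite -(big_map (fun j : nat => - (j%:Z)) xpredT (fun z => 2 * omega z 1%N - 1)).
set S := map _ _.
have hS : forall z, z \in S -> z \in undup [seq X m | m <- iota 0 n].
  move=> z /mapP [j]; rewrite mem_index_iota => /andP[aj ji] ->.
  rewrite mem_undup; apply: ivt => //.
    rewrite Hy; lia.
  move: aj; rewrite /a => aj; lia.
apply: le_trans (_ : \sum_(z <- S) Dsite omega X z n <= _).
  rewrite big_seq_cond [X in _ <= X]big_seq_cond; apply: ler_sum => z /andP[zS _].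
  apply: Dsite_first => //; by move: (hS z zS); rewrite mem_undup.
rewrite [X in _ <= X]/Dtot; apply: sub_sum => //.
- rewrite map_inj_uniq ?iota_uniq // => j1 j2 /eqP; rewrite eqr_opp => /eqP [] //.
- exact: undup_uniq.
- by move=> z; apply: Dsite_ge0.
Qed.

Lemma left_bound n : - (K1 + Dtot omega X n / c) <= (X n)%:~R.
Proof.
have D0 : 0 <= Dtot omega X n / c by rewrite divr_ge0 ?Dtot_ge0 // ltW.
have ax0 : 0 <= ax / c by rewrite divr_ge0 ?ler0n // ltW.
have ax00 : 0 <= ax by rewrite /ax ler0n.
have xax : - ax <= (x%:~R : R).
  rewrite /ax -int_natR -intrN ler_int; lia.
rewrite /K1 -/ax.
case: (leP x (X n)) => h1.
  have : (x%:~R : R) <= (X n)%:~R by rewrite ler_int.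
  have := ler0n R I; lra.
case: (leP (- (I%:Z) - 1) (X n)) => h2.
  have h : ((- (I%:Z) - 1)%:~R : R) <= (X n)%:~R by rewrite ler_int.
  have e : ((- (I%:Z) - 1)%:~R : R) = - I%:R - 1 by rewrite intrB intrN.
  rewrite e in h; have := ler0n R I; lra.
have [i Hi] : exists i : nat, X n = - (i%:Z) - 1 by exists (absz (X n + 1)); lia.
have Ii : (I <= i)%N by lia.
have h3 := le_trans (Hc Ii) (sum_le_D Hi).
have h4 : i%:R <= ax / c + Dtot omega X n / c.
  rewrite -mulrDl ler_pdivlMr // mulrC //.
have e : ((- (i%:Z) - 1)%:~R : R) = - i%:R - 1 by rewrite intrB intrN.
rewrite Hi e; have := ler0n R I; lra.
Qed.

End Left.

Definition upd (b : nat -> bool) (n : nat) (v : bool) : nat -> bool :=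
  fun m => if m == n then v else b m.

Lemma upd_lt b n v m : (m < n)%N -> upd b n v m = b m.
Proof. by rewrite /upd => h; rewrite (ltn_eqF h). Qed.

Lemma upd_n b n v : upd b n v n = v.
Proof. by rewrite /upd eqxx. Qed.

Definition depn {R : Type} (n : nat) (F : (nat -> bool) -> R) :=
  forall b b', (forall m, (m < n)%N -> b m = b' m) -> F b = F b'.

Lemma depn_upd {R : Type} n (F : (nat -> bool) -> R) b v : depn n F -> F (upd b n v) = F b.
Proof. by move=> H; apply: H => m; apply: upd_lt. Qed.

Lemma depn_mono {R : Type} n j (F : (nat -> bool) -> R) : (n <= j)%N -> depn n F -> depn j F.
Proof. by move=> nj H b b' E; apply: H => m mn; apply: E; exact: leq_trans mn nj. Qed.

Section Sm.
Variable R : realType.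

Fixpoint Sm (n : nat) (F : (nat -> bool) -> R) : R :=
  match n with
  | 0 => F (fun _ => false)
  | n'.+1 => Sm n' (fun b => F (upd b n' true) + F (upd b n' false))
  end.

Lemma Sm_ext n F G : (forall b, F b = G b) -> Sm n F = Sm n G.
Proof. by move=> H; congr (Sm n _); apply: funext. Qed.

Lemma SmD n F G : Sm n (fun b => F b + G b) = Sm n F + Sm n G.
Proof.
elim: n F G => [//|n IH] F G /=.
rewrite -IH; apply: Sm_ext => b; ring.
Qed.

Lemma SmZ n a F : Sm n (fun b => a * F b) = a * Sm n F.
Proof.
elim: n F => [//|n IH] F /=.
rewrite -IH; apply: Sm_ext => b; ring.
Qed.

Lemma Sm_le n F G : (forall b, F b <= G b) -> Sm n F <= Sm n G.
Proof.
elim: n F G => [|n IH] F G H /=; first exact: H.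
by apply: IH => b; apply: lerD.
Qed.

End Sm.

Section Ex.
Variable R : realType.
Variable omega : int -> nat -> R.
Hypothesis Hom : in_Omega_plus omega.
Variable x : int.

Definition om n b : R := wat omega x (walk_hist omega x (ub b) n).
Definition stepw n b (v : bool) : R := if v then om n b else 1 - om n b.
Definition w n b : R := \prod_(0 <= m < n) stepw m b (b m).
Definition Ex n (F : (nat -> bool) -> R) : R := Sm n (fun b => w n b * F b).
Definition Xb b := walk omega x (ub b).

Lemma om_range n b : 2^-1 <= om n b <= 1.
Proof. exact: (wat_range Hom). Qed.

Lemma om_dep n : depn n (om n).
Proof. by move=> b b' H; rewrite /om (hist_dep Hom x H). Qed.

Lemma stepw_ge0 n b v : 0 <= stepw n b v.
Proof. have /andP[h1 h2] := om_range n b; rewrite /stepw; case: v; lra. Qed.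

Lemma w_ge0 n b : 0 <= w n b.
Proof. by rewrite /w prodr_ge0 // => m _; apply: stepw_ge0. Qed.

Lemma w_dep n : depn n (w n).
Proof.
move=> b b' H; rewrite /w; apply: eq_big_nat => m /andP[_ mn].
rewrite /stepw H // (@om_dep m b b') // => j jm; apply: H; exact: ltn_trans jm mn.
Qed.

Lemma w_S n b v : w n.+1 (upd b n v) = w n b * stepw n b v.
Proof.
rewrite /w big_nat_recr //= -/(w n _) (@w_dep n (upd b n v) b); last by move=> m; apply: upd_lt.
rewrite upd_n /stepw (@om_dep n (upd b n v) b) //; by move=> m; apply: upd_lt.
Qed.

Lemma Ex_ext n F G : (forall b, F b = G b) -> Ex n F = Ex n G.
Proof. by move=> H; apply: Sm_ext => b; rewrite H. Qed.

Lemma Ex_S n F : Ex n.+1 F =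
  Ex n (fun b => om n b * F (upd b n true) + (1 - om n b) * F (upd b n false)).
Proof. by rewrite /Ex /=; apply: Sm_ext => b; rewrite !w_S /stepw; ring. Qed.

Lemma ExD n F G : Ex n (fun b => F b + G b) = Ex n F + Ex n G.
Proof. by rewrite /Ex -SmD; apply: Sm_ext => b; ring. Qed.

Lemma ExZ n a F : Ex n (fun b => a * F b) = a * Ex n F.
Proof. by rewrite /Ex -SmZ; apply: Sm_ext => b; ring. Qed.

Lemma ExB n F G : Ex n (fun b => F b - G b) = Ex n F - Ex n G.
Proof.
have -> : (fun b => F b - G b) = (fun b => F b + (-1) * G b) by apply: funext => b; ring.
by rewrite ExD ExZ; ring.
Qed.

Lemma Ex_le n F G : (forall b, F b <= G b) -> Ex n F <= Ex n G.
Proof. by move=> H; apply: Sm_le => b; apply: ler_wpM2l; [apply: w_ge0|apply: H]. Qed.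

Lemma Ex_const n a : Ex n (fun _ => a) = a.
Proof.
elim: n => [|n IH]; first by rewrite /Ex /= /w big_geq // mul1r.
by rewrite Ex_S -[RHS]IH; apply: Ex_ext => b; ring.
Qed.

Lemma Ex_ge0 n F : (forall b, 0 <= F b) -> 0 <= Ex n F.
Proof.
move=> H; rewrite -(Ex_const n 0); exact: Ex_le.
Qed.



Lemma Ex_dep1 n F : depn n F -> Ex n.+1 F = Ex n F.
Proof.
move=> H; rewrite Ex_S; apply: Ex_ext => b.
rewrite !(depn_upd _ _ H); ring.
Qed.

Lemma Ex_dep n j F : (n <= j)%N -> depn n F -> Ex j F = Ex n F.
Proof.
move/subnK <-; elim: (j - n)%N => [|i IH] H; first by rewrite add0n.
rewrite addSn Ex_dep1 ?IH //; apply: depn_mono H; exact: leq_addl.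
Qed.

Lemma Xb_dep n : depn n.+1 (fun b => Xb b n).
Proof.
move=> b b' H; apply: (walk_dep Hom x) => m mn; apply: H; exact: ltn_trans mn (ltnSn n).
Qed.

Lemma Xb_dep' m n : (m <= n)%N -> depn n (fun b => Xb b m).
Proof.
move=> mn b b' H; apply: (walk_dep Hom x) => j jm; apply: H; exact: leq_trans jm mn.
Qed.

Lemma XbS b n : Xb b n.+1 = if b n then Xb b n + 1 else Xb b n - 1.
Proof. by rewrite /Xb walkS ub_lt //; exact: (wat_range Hom). Qed.

Lemma Xb0 b : Xb b 0%N = x.
Proof. by []. Qed.

Lemma Xb_nn b n : Xb b n.+1 = Xb b n + 1 \/ Xb b n.+1 = Xb b n - 1.
Proof. by rewrite XbS; case: (b n); [left|right]. Qed.

Lemma Xb_upd b n v : Xb (upd b n v) n.+1 = if v then Xb b n + 1 else Xb b n - 1.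
Proof.
by rewrite XbS upd_n (@Xb_dep' n n (leqnn n) (upd b n v) b) // => m mn; apply: upd_lt.
Qed.

Lemma count_nvisits (X : nat -> int) z N :
  count (pred1 z) [seq X m | m <- iota 0 N] = nvisits X z N.
Proof.
elim: N => [|N IH]; first by rewrite /nvisits big_geq.
by rewrite iotaS0 map_cat count_cat IH nvisitsS /= addn0.
Qed.

Lemma om_dr n b : 2 * om n b - 1 = dr omega (Xb b) n.
Proof.
rewrite /om /wat /dr hist_map -/(Xb b).
have -> : last x [seq Xb b m | m <- iota 0 n.+1] = Xb b n.
  by rewrite iotaS0 map_cat cats1 last_rcons.
by rewrite count_nvisits nvisitsS eqxx addn1.
Qed.

End Ex.

Section Mart.
Variable R : realType.
Variable omega : int -> nat -> R.
Hypothesis Hom : in_Omega_plus omega.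
Variables (x k : int).
Hypothesis xk : x <= k.

Notation Xb := (Xb omega x).
Notation om := (om omega x).
Notation Ex := (Ex omega x).

Definition tau n b := hitn (Xb b) k n.
Definition Sf (F : nat -> (nat -> bool) -> R) n b := F (tau n b) b.

Lemma tau_le n b : (tau n b <= n)%N.
Proof. exact: hitn_le. Qed.

Lemma Xb_agree b n v m : (m <= n)%N -> Xb (upd b n v) m = Xb b m.
Proof. by move=> mn; apply: (Xb_dep' Hom x mn) => j jn; apply: upd_lt. Qed.

Lemma tau_upd n b v : tau n (upd b n v) = tau n b.
Proof. by apply: hitn_dep => m mn; apply: Xb_agree; apply: ltnW. Qed.

Lemma tau_dep n : depn n (tau n).
Proof.
move=> b b' H; apply: hitn_dep => m mn.
by apply: (Xb_dep' Hom x (ltnW mn)).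
Qed.

Lemma tau_S n b v : tau n.+1 (upd b n v) =
  if (tau n b < n)%N || (Xb b n == k) then tau n b else n.+1.
Proof.
rewrite /tau hitn_S -/(tau n _) -/(tau n (upd b n v)) tau_upd Xb_agree //.
case: (ltnP (tau n b) n) => //= h.
have e : tau n b = n by apply/eqP; rewrite eqn_leq tau_le.
by case: (Xb b n == k) => //.
Qed.

Lemma Sf_S F n b v : (forall t, depn t (F t)) ->
  Sf F n.+1 (upd b n v) =
  if (tau n b < n)%N || (Xb b n == k) then Sf F n b else F n.+1 (upd b n v).
Proof.
move=> dF; rewrite /Sf tau_S; case: ifP => // _.
apply: dF => m mt; apply: upd_lt; exact: leq_trans mt (tau_le n b).
Qed.

Lemma Sf_full F n b : ~~ (tau n b < n)%N -> Sf F n b = F n b.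
Proof.
move=> h; rewrite /Sf; have -> // : tau n b = n.
by apply/eqP; rewrite eqn_leq tau_le leqNgt.
Qed.

Lemma tau_full_below n b m : ~~ (tau n b < n)%N -> (m < n)%N -> Xb b m != k.
Proof.
move=> h mn; apply: (hitn_before (n := n)); rewrite -/(tau n b).
have -> // : tau n b = n by apply/eqP; rewrite eqn_leq tau_le leqNgt.
Qed.

Lemma Sf_depn F n : (forall t, depn t (F t)) -> depn n (Sf F n).
Proof.
move=> dF b b' H; rewrite /Sf (tau_dep H); apply: dF => m mt; apply: H.
exact: leq_trans mt (tau_le n b').
Qed.

Lemma Ex_stop_le F : (forall t, depn t (F t)) ->
  (forall n b, ~~ (tau n b < n)%N -> Xb b n != k ->
     F n b <= om n b * F n.+1 (upd b n true) + (1 - om n b) * F n.+1 (upd b n false)) ->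
  forall n, Ex n (Sf F n) <= Ex n.+1 (Sf F n.+1).
Proof.
move=> dF HF n; rewrite (Ex_S Hom); apply: (Ex_le Hom) => b.
rewrite !Sf_S //; case: ifP => h.
  by rewrite -mulrDl addrC subrK mul1r.
move/negbT: h; rewrite negb_or => /andP[h1 h2].
rewrite Sf_full //; exact: HF.
Qed.

Lemma Ex_stop_eq F : (forall t, depn t (F t)) ->
  (forall n b, ~~ (tau n b < n)%N -> Xb b n != k ->
     F n b = om n b * F n.+1 (upd b n true) + (1 - om n b) * F n.+1 (upd b n false)) ->
  forall n, Ex n (Sf F n) = Ex n.+1 (Sf F n.+1).
Proof.
move=> dF HF n; rewrite (Ex_S Hom); apply: Ex_ext => b.
rewrite !Sf_S //; case: ifP => h.
  by rewrite -mulrDl addrC subrK mul1r.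
move/negbT: h; rewrite negb_or => /andP[h1 h2].
rewrite Sf_full //; exact: HF.
Qed.

Definition Gm t b : R := Dtot omega (Xb b) t + (k - Xb b t)%:~R.

Lemma Gm_dep t : depn t (Gm t).
Proof.
move=> b b' H; rewrite /Gm (Dtot_dep omega (X' := Xb b')) ?(Xb_dep' Hom x (leqnn t) H) //.
by move=> m mt; apply: (Xb_dep' Hom x (ltnW mt) H).
Qed.

Lemma Gm_step n b : Gm n b =
  om n b * Gm n.+1 (upd b n true) + (1 - om n b) * Gm n.+1 (upd b n false).
Proof.
rewrite /Gm !DtotS !(Xb_upd Hom).
have dr_upd v : dr omega (Xb (upd b n v)) n = dr omega (Xb b) n.
  rewrite /dr Xb_agree //; congr (2 * omega _ _.+1 - 1).
  by apply: eq_big_nat => m /andP[_ mn]; rewrite Xb_agree // ltnW.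
have D_upd v : Dtot omega (Xb (upd b n v)) n = Dtot omega (Xb b) n.
  by apply: Dtot_dep => m mn; rewrite Xb_agree // ltnW.
rewrite !dr_upd !D_upd -om_dr /= !intrB !intrD.
ring.
Qed.

Lemma mart n : Ex n (Sf Gm n) = (k - x)%:~R.
Proof.
elim: n => [|n IH].
  by rewrite /Ex /= /w big_geq // mul1r /Sf /tau /hitn /= /Gm Dtot0 add0r Xb0.
rewrite -IH; symmetry; apply: Ex_stop_eq; first exact: Gm_dep.
by move=> m b _ _; apply: Gm_step.
Qed.

End Mart.

Section Psi.
Variable R : realType.
Variable omega : int -> nat -> R.
Hypothesis Hom : in_Omega_plus omega.
Variables (x k : int).
Hypothesis xk : x <= k.

Notation Xb := (Xb omega x).
Notation om := (om omega x).
Notation Ex := (Ex omega x).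
Notation tau := (tau omega x k).
Notation Sf := (Sf omega x k).

Definition rho (y : int) : R := (2^-1 : R) ^+ absz (k - y).

Lemma rho_ge0 y : 0 <= rho y.
Proof. by rewrite /rho exprn_ge0 // invr_ge0 ler0n. Qed.

Lemma rho_le1 y : rho y <= 1.
Proof. by rewrite /rho exprn_ile1 // ?invr_ge0 ?ler0n // invf_le1 // ler1n. Qed.

Definition Psi t b : R := rho (Xb b t) - 4^-1 * \sum_(0 <= m < t) rho (Xb b m).

Lemma Psi_dep t : depn t (Psi t).
Proof.
move=> b b' H; rewrite /Psi (Xb_dep' Hom x (leqnn t) H); congr (_ - 4^-1 * _).
by apply: eq_big_nat => m /andP[_ mt]; rewrite (Xb_dep' Hom x (ltnW mt) H).
Qed.

Lemma Xb_lt_k n b : ~~ (tau n b < n)%N -> Xb b n != k -> Xb b n < k.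
Proof.
move=> h1 h2; have : Xb b n <= k.
  apply: (below_k (Xb0 omega x b) (Xb_nn Hom x b)) => // m mn.
  exact: tau_full_below h1 mn.
by rewrite le_eqVlt (negbTE h2).
Qed.

Lemma Psi_step n b : ~~ (tau n b < n)%N -> Xb b n != k ->
  Psi n b <= om n b * Psi n.+1 (upd b n true) + (1 - om n b) * Psi n.+1 (upd b n false).
Proof.
move=> h1 h2; have lt := Xb_lt_k h1 h2.
rewrite /Psi !big_nat_recr //= !(Xb_upd Hom).
have S_upd v : \sum_(0 <= m < n) rho (Xb (upd b n v) m) = \sum_(0 <= m < n) rho (Xb b m).
  by apply: eq_big_nat => m /andP[_ mn]; rewrite (Xb_agree Hom) // ltnW.
rewrite !S_upd !(Xb_agree Hom) //.
set S := \sum_(0 <= m < n) _.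
set j := absz (k - Xb b n - 1)%R.
have e0 : absz (k - Xb b n)%R = j.+1 by rewrite /j; lia.
have e1 : absz (k - (Xb b n + 1))%R = j by rewrite /j; lia.
have e2 : absz (k - (Xb b n - 1))%R = j.+2 by rewrite /j; lia.
rewrite /rho e0 e1 e2 !exprS.
have /andP[ho1 ho2] := om_range Hom x n b.
have p0 : 0 <= (2^-1 : R) ^+ j by rewrite exprn_ge0 // invr_ge0 ler0n.
move: ho1 ho2 p0.
set p := (2^-1 : R) ^+ j.
set oo := om n b.
have -> : (2^-1 : R) = 1/2 by rewrite div1r.
have -> : (4^-1 : R) = 1/4 by rewrite div1r.
move=> ho1 ho2 p0.
have hh : 0 <= (oo - 1/2) * p by apply: mulr_ge0; lra.
nra.
Qed.

Lemma Psi_mono n : Ex 0 (Sf Psi 0) <= Ex n (Sf Psi n).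
Proof.
elim: n => [//|n IH]; apply: le_trans IH _.
apply: (Ex_stop_le Hom); first exact: Psi_dep.
exact: Psi_step.
Qed.

Lemma sum_rho_bound n : Ex n (fun b => \sum_(0 <= m < tau n b) rho (Xb b m)) <= 4.
Proof.
have h0 : 0 <= Ex n (Sf Psi n).
  apply: le_trans (Psi_mono n).
  by rewrite /Ex /= /w big_geq // mul1r /Sf /Psi big_geq // mulr0 subr0 rho_ge0.
have -> : (fun b => \sum_(0 <= m < tau n b) rho (Xb b m)) =
          (fun b => 4 * rho (Xb b (tau n b)) - 4 * Sf Psi n b).
  by apply: funext => b; rewrite /Sf /Psi; field.
rewrite ExB ExZ ExZ.
have : Ex n (fun b => rho (Xb b (tau n b))) <= 1.
  rewrite -[X in _ <= X](Ex_const Hom x n 1); apply: (Ex_le Hom) => b; exact: rho_le1.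
lra.
Qed.

End Psi.

Lemma hitn_mono X k m n : (m <= n)%N -> (hitn X k m <= hitn X k n)%N.
Proof.
move/subnK <-; elim: (n - m)%N => [|j IH]; first by rewrite add0n.
apply: leq_trans IH _; rewrite addSn hitn_S.
case: ifP => // /negbT; rewrite -leqNgt => h.
have e : hitn X k (j + m) = (j + m)%N by apply/eqP; rewrite eqn_leq hitn_le.
by case: (X (j + m) == k); rewrite e // leqnSn.
Qed.

Section Fin.
Variable R : realType.
Variable omega : int -> nat -> R.
Hypothesis Hom : in_Omega_plus omega.
Variables (x k : int).
Hypothesis xk : x <= k.
Variables (c : R) (I : nat).
Hypothesis c0 : 0 < c.
Hypothesis Hc : forall i, (I <= i)%N ->
  c * i%:R <= \sum_(0 <= j < i.+1) (2 * omega (- (j%:Z)) 1%N - 1).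

Notation Xb := (Xb omega x).
Notation om := (om omega x).
Notation Ex := (Ex omega x).
Notation tau := (tau omega x k).
Notation Sf := (Sf omega x k).

Definition Dn n b : R := Dtot omega (Xb b) (tau n b).
Definition an n : R := Ex n (Dn n).
Definition en n : R := Ex n (fun b => (k - Xb b (tau n b))%:~R).

Lemma Dn_ge0 n b : 0 <= Dn n b.
Proof. exact: Dtot_ge0. Qed.

Lemma Dn_le n b : Dn n b <= n%:R.
Proof. apply: le_trans (Dtot_le Hom _ _) _; rewrite ler_nat; exact: tau_le. Qed.

Lemma Dn_mono m n b : (m <= n)%N -> Dn m b <= Dn n b.
Proof. by move=> mn; apply: Dtot_mono => //; apply: hitn_mono. Qed.

Lemma Dt_dep t : depn t (fun b => Dtot omega (Xb b) t).
Proof. by move=> b b' H; apply: Dtot_dep => m mt; apply: (Xb_dep' Hom x (ltnW mt) H). Qed.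

Lemma Dn_dep n : depn n (Dn n).
Proof. exact: (Sf_depn Hom x k (F := fun t b => Dtot omega (Xb b) t)) Dt_dep. Qed.

Lemma Xtau_le n b : Xb b (tau n b) <= k.
Proof. exact: (Xhit_le (Xb0 omega x b) (Xb_nn Hom x b)). Qed.

Lemma an_en n : an n + en n = (k - x)%:~R.
Proof.
rewrite /an /en -ExD -(mart Hom x k n); apply: Ex_ext => b.
by rewrite /Sf /Gm /Dn.
Qed.

Lemma en_ge0 n : 0 <= en n.
Proof.
apply: (Ex_ge0 Hom) => b; rewrite -(mulr0z (1:R)) ler_int subr_ge0; exact: Xtau_le.
Qed.

Lemma an_le n : an n <= (k - x)%:~R.
Proof. by rewrite -(an_en n) lerDl en_ge0. Qed.

Lemma an_ge0 n : 0 <= an n.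
Proof. by apply: (Ex_ge0 Hom) => b; apply: Dn_ge0. Qed.

Lemma an_S n : an n <= an n.+1.
Proof.
apply: (Ex_stop_le Hom (F := fun t b => Dtot omega (Xb b) t)); first exact: Dt_dep.
move=> m b _ _.
have h v : Dtot omega (Xb b) m <= Dtot omega (Xb (upd b m v)) m.+1.
  rewrite DtotS (Dtot_dep omega (X' := Xb b)); last by move=> j jm; rewrite (Xb_agree Hom) // ltnW.
  by rewrite lerDl; case/andP: (dr_range Hom (Xb (upd b m v)) m).
have /andP[ho1 ho2] := om_range Hom x m b.
have h1 := h true; have h2 := h false.
have p1 : om m b * Dtot omega (Xb b) m <= om m b * Dtot omega (Xb (upd b m true)) m.+1.
  by apply: ler_wpM2l => //; lra.
have p2 : (1 - om m b) * Dtot omega (Xb b) m <= (1 - om m b) * Dtot omega (Xb (upd b m false)) m.+1.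
  by apply: ler_wpM2l => //; lra.
have : Dtot omega (Xb b) m = om m b * Dtot omega (Xb b) m + (1 - om m b) * Dtot omega (Xb b) m.
  by ring.
lra.
Qed.

Lemma an_mono m n : (m <= n)%N -> an m <= an n.
Proof.
move/subnK <-; elim: (n - m)%N => [|j IH]; first by rewrite add0n.
by apply: le_trans IH _; rewrite addSn an_S.
Qed.

Lemma UI (n0 : nat) (M eps : R) : 0 < M -> n0%:R <= M -> (forall n, (n0 <= n)%N -> an n - an n0 <= eps) ->
  0 <= eps ->
  forall n, Ex n (fun b => Dn n b * ((M < Dn n b)%R)%:R) <= eps + n0%:R / M * (k - x)%:~R.
Proof.
move=> M0 n0M Heps eps0 n.
have kx0 : 0 <= ((k - x)%:~R : R) by rewrite -(mulr0z (1:R)) ler_int subr_ge0.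
have rhs0 : 0 <= eps + n0%:R / M * (k - x)%:~R.
  by apply: addr_ge0 => //; apply: mulr_ge0 => //; apply: divr_ge0 => //; apply: ltW.
case: (ltnP n n0) => nn0.
  have -> : Ex n (fun b => Dn n b * ((M < Dn n b)%R)%:R) = Ex n (fun _ => 0); last by rewrite (Ex_const Hom).
  apply: Ex_ext => b.
  have : Dn n b <= n%:R := Dn_le n b.
  have : (n%:R : R) <= n0%:R by rewrite ler_nat ltnW.
  move=> h1 h2; have -> : (M < Dn n b) = false by apply/negbTE; rewrite -leNgt; lra.
  by rewrite mulr0.
apply: le_trans (_ : Ex n (fun b => (Dn n b - Dn n0 b) + n0%:R / M * Dn n b) <= _).
  apply: (Ex_le Hom) => b.
  have d0 := Dn_ge0 n0 b; have d1 := Dn_mono b nn0; have d2 := Dn_le n0 b.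
  have q0 : 0 <= n0%:R / M * Dn n b.
    by apply: mulr_ge0; [apply: divr_ge0 => //; apply: ltW | apply: Dn_ge0].
  case: ltP => h; last by rewrite mulr0; lra.
  rewrite mulr1.
  have : n0%:R <= n0%:R / M * Dn n b.
    rewrite mulrAC ler_pdivlMr // ler_wpM2l //; exact: ltW.
  lra.
rewrite ExD ExB ExZ (@Ex_dep R omega Hom x n0 n _ nn0 (@Dn_dep n0)) -/(an n) -/(an n0).
have := Heps n nn0; have := an_le n; have := an_ge0 n.
have : 0 <= n0%:R / M by apply: divr_ge0 => //; apply: ltW.
move=> q h1 h2 h3.
have : n0%:R / M * an n <= n0%:R / M * (k - x)%:~R by apply: ler_wpM2l.
lra.
Qed.

Notation Kk := ((k%:~R : R) + K1 x c I).

Lemma Kk_ge0 : 0 <= Kk.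
Proof.
have : (x%:~R : R) <= k%:~R by rewrite ler_int.
have : - ((absz x)%:R : R) <= x%:~R.
  rewrite -[(absz x)%:R]/(((absz x)%:Z)%:~R : R) -intrN ler_int; lia.
have := ler0n R I; have : 0 <= ((absz x)%:R : R) / c by apply: divr_ge0 => //; apply: ltW.
rewrite /K1; lra.
Qed.

Definition ind (M : R) n b : R := ((~~ (tau n b < n)%N) && (Dn n b <= M)%R)%:R.

Lemma e_point (M : R) n b : Kk <= M ->
  ((k - Xb b (tau n b))%:~R : R) <= (Kk + M / c) * ind M n b + (1 + 1 / c) * (Dn n b * ((M < Dn n b)%R)%:R).
Proof.
move=> KM.
have cinv : 0 <= 1 / c by apply: divr_ge0 => //; apply: ltW.
have D0 := Dn_ge0 n b.
have DM0 : 0 <= Dn n b * ((M < Dn n b)%R)%:R by apply: mulr_ge0 => //; apply: ler0n.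
have Kc0 : 0 <= Kk + M / c.
  apply: addr_ge0; first exact: Kk_ge0.
  apply: divr_ge0 => //; [apply: le_trans KM; exact: Kk_ge0 | exact: ltW].
rewrite /ind; case: (ltnP (tau n b) n) => /= h.
  rewrite /tau hitn_hit // subrr mulr0 add0r; apply: mulr_ge0 => //; lra.
have e : tau n b = n by apply/eqP; rewrite eqn_leq tau_le.
have lb := left_bound Hom (Xb0 omega x b) (Xb_nn Hom x b) c0 Hc n.
have eD : Dn n b = Dtot omega (Xb b) n by rewrite /Dn e.
rewrite e intrB; rewrite -eD in lb.
have Dc0 : 0 <= Dn n b / c by apply: divr_ge0 => //; apply: ltW.
case: (leP (Dn n b) M) => hD /=.
  rewrite mulr1 mulr0 mulr0 addr0.
  have : Dn n b / c <= M / c by apply: ler_wpM2r => //; rewrite invr_ge0 ltW.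
  lra.
rewrite mulr0 add0r mulr1 mulrDl mul1r.
have : Dn n b / c = 1 / c * Dn n b by rewrite mulrC div1r.
lra.
Qed.

Lemma en_bound (M : R) n : Kk <= M ->
  en n <= (Kk + M / c) * Ex n (ind M n) + (1 + 1 / c) * Ex n (fun b => Dn n b * ((M < Dn n b)%R)%:R).
Proof.
move=> KM; rewrite -!ExZ -ExD; apply: (Ex_le Hom) => b; exact: e_point.
Qed.

Lemma ind_bound (M : R) n (N : nat) : Kk + M / c <= N%:R ->
  n%:R * (2^-1) ^+ N * Ex n (ind M n) <= 4.
Proof.
move=> KN; apply: le_trans (sum_rho_bound Hom xk n); rewrite -ExZ.
apply: (Ex_le Hom) => b; rewrite /ind.
case: (ltnP (tau n b) n) => /= h.
  by rewrite mulr0 sumr_ge0 // => m _; apply: rho_ge0.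
have e : tau n b = n by apply/eqP; rewrite eqn_leq tau_le.
case: (leP (Dn n b) M) => hD /=; last first.
  by rewrite mulr0 sumr_ge0 // => m _; apply: rho_ge0.
rewrite mulr1 e; have -> : n%:R * (2^-1 : R) ^+ N = \sum_(0 <= m < n) (2^-1 : R) ^+ N by rewrite sumr_const_nat subn0 mulr_natl.
apply: ler_sum_nat => m /andP[_ mn].
have hne : Xb b m != k by apply: (tau_full_below (n := n)); rewrite ?e ?ltnn.
have hle : Xb b m <= k.
  apply: (below_k (Xb0 omega x b) (Xb_nn Hom x b)) => // j jm.
  apply: (tau_full_below (n := n)); [by rewrite e ltnn| exact: ltn_trans jm mn].
have lb := left_bound Hom (Xb0 omega x b) (Xb_nn Hom x b) c0 Hc m.
have Dm : Dtot omega (Xb b) m <= M.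
  apply: le_trans hD; rewrite /Dn e; apply: Dtot_mono => //; exact: ltnW.
have Dmc : Dtot omega (Xb b) m / c <= M / c by apply: ler_wpM2r => //; rewrite invr_ge0 ltW.
have habs : ((absz (k - Xb b m)%R)%:R : R) = (k - Xb b m)%:~R.
  rewrite natr_absz; congr (_%:~R); lia.
have hN : (absz (k - Xb b m)%R <= N)%N.
  rewrite -(ler_nat R) habs intrB; lra.
rewrite /rho; apply: ler_wiXn2l => //.
by rewrite invf_le1 // ler1n.
Qed.

End Fin.

Section Eps.
Variable R : realType.
Variable omega : int -> nat -> R.
Hypothesis Hom : in_Omega_plus omega.
Variables (x k : int).
Hypothesis xk : x <= k.
Variables (c : R) (I : nat).
Hypothesis c0 : 0 < c.
Hypothesis Hc : forall i, (I <= i)%N ->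
  c * i%:R <= \sum_(0 <= j < i.+1) (2 * omega (- (j%:Z)) 1%N - 1).

Notation an := (an omega x k).
Notation en := (en omega x k).
Notation Ex := (Ex omega x).
Notation Kk := ((k%:~R : R) + K1 x c I).

Lemma en_small eps : 0 < eps -> exists n, en n <= eps.
Proof.
move=> eps0.
have ci0 : 0 <= 1 / c by apply: divr_ge0 => //; apply: ltW.
pose d := eps / (3 + 2 / c).
have den0 : 0 < 3 + 2 / c by apply: ltr_wpDr; [apply: divr_ge0 => //; apply: ltW|].
have d0 : 0 < d by apply: divr_gt0.
have kx0 : 0 <= ((k - x)%:~R : R) by rewrite -(mulr0z (1:R)) ler_int subr_ge0.
pose E := range an.
have hsE : has_sup E.
  split; first by exists (an 0%N); exists 0%N.
  exists (k - x)%:~R => y [n _ <-]; exact: an_le.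
have [e0 [n0 _ <-] hn0] := sup_adherent d0 hsE.
have Heps : forall n, (n0 <= n)%N -> an n - an n0 <= d.
  move=> n _; have : an n <= sup E by apply: sup_upper_bound => //; exists n.
  lra.
have Kk0 : 0 <= Kk by exact: Kk_ge0.
pose M := Kk + n0%:R + (n0%:R * (k - x)%:~R) / d + 1.
have q1 : 0 <= (n0%:R * (k - x)%:~R) / d by apply: divr_ge0; [apply: mulr_ge0|apply: ltW].
have n00 := ler0n R n0.
have M0 : 0 < M by rewrite /M; lra.
have n0M : n0%:R <= M by rewrite /M; lra.
have KM : Kk <= M by rewrite /M; lra.
have hnM : n0%:R / M * (k - x)%:~R <= d.
  rewrite mulrAC ler_pdivrMr // -ler_pdivrMl // mulrC; rewrite /M; lra.
have UIb n : Ex n (fun b => Dn omega x k n b * ((M < Dn omega x k n b)%R)%:R) <= d + d.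
  apply: le_trans (UI Hom xk M0 n0M Heps (ltW d0) n) _; lra.
pose A := Kk + M / c.
have A0 : 0 <= A by rewrite /A; apply: addr_ge0 => //; apply: divr_ge0 => //; apply: ltW.
pose N := Num.Def.archi_bound A.
have AN : A <= N%:R by apply: ltW; apply: archi_boundP.
pose q := (2^-1 : R) ^+ N.
have q0 : 0 < q by rewrite /q exprn_gt0 // invr_gt0 ltr0n.
pose n := (Num.Def.archi_bound (4 * A / (q * d))).+1.
have hn : 4 * A / (q * d) < n%:R.
  apply: lt_trans (archi_boundP _) _.
    by apply: divr_ge0; [apply: mulr_ge0|apply: ltW; apply: mulr_gt0].
  by rewrite ltr_nat.
exists n.
have IB := ind_bound Hom xk c0 Hc n AN.
have P0 : 0 <= Ex n (ind omega x k M n).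
  by apply: (Ex_ge0 Hom) => b; rewrite /ind ler0n.
have nq0 : 0 < n%:R * q by apply: mulr_gt0 => //; rewrite ltr0n.
have hAP : A * Ex n (ind omega x k M n) <= d.
  have h1 : A * Ex n (ind omega x k M n) * (n%:R * q) <= 4 * A.
    have -> : A * Ex n (ind omega x k M n) * (n%:R * q) = A * (n%:R * q * Ex n (ind omega x k M n)) by ring.
    by rewrite [4 * A]mulrC; apply: ler_wpM2l => //; exact: IB.
  have h2 : 4 * A < d * (n%:R * q).
    have qd0 : 0 < q * d by apply: mulr_gt0.
    move: hn; rewrite ltr_pdivrMr // => hn.
    by have -> : d * (n%:R * q) = n%:R * (q * d) by ring.
  rewrite -(ler_pM2r nq0); apply: ltW; exact: le_lt_trans h1 h2.
have EB := en_bound Hom xk c0 Hc n KM.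
have hU := UIb n.
have : (1 + 1 / c) * Ex n (fun b => Dn omega x k n b * ((M < Dn omega x k n b)%R)%:R)
        <= (1 + 1 / c) * (d + d) by apply: ler_wpM2l => //; lra.
have ed : d * (3 + 2 / c) = eps by rewrite /d mulfVK // gt_eqF.
have : (1 + 1 / c) * (d + d) + d = d * (3 + 2 / c) by ring.
rewrite -/A in EB; lra.
Qed.

End Eps.

Fixpoint agr n (b a : nat -> bool) : bool :=
  if n is n'.+1 then agr n' b a && (b n' == a n') else true.

Lemma agrP n b a : agr n b a <-> (forall m, (m < n)%N -> b m = a m).
Proof.
elim: n => [|n IH] /=; first by split.
split.
  move=> /andP[/IH H /eqP e] m; rewrite ltnS leq_eqVlt => /orP[/eqP ->//|]; exact: H.
move=> H; apply/andP; split; last by apply/eqP; apply: H.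
by apply/IH => m mn; apply: H; apply: ltnW.
Qed.

Lemma agr_dep n a : depn n (fun b => agr n b a).
Proof.
move=> b b' H; apply/idP/idP => /agrP h; apply/agrP => m mn.
  by rewrite -H ?h.
by rewrite H ?h.
Qed.

Section Sm2.
Variable R : realType.

Lemma Sm_indic n (G : (nat -> bool) -> R) a : depn n G ->
  Sm n (fun b => G b * (agr n b a)%:R) = G a.
Proof.
elim: n G => [|n IH] G HG /=.
  by rewrite mulr1; apply: HG.
have -> : (fun b => G (upd b n true) * (agr n (upd b n true) a && (upd b n true n == a n))%:R +
         G (upd b n false) * (agr n (upd b n false) a && (upd b n false n == a n))%:R)
   = (fun b => G (upd b n (a n)) * (agr n b a)%:R).
  apply: funext => b; rewrite !upd_n !(depn_upd b _ (@agr_dep n a)).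
  by case: (a n); case: (agr n b a) => /=; rewrite ?mulr0 ?mulr1 ?addr0 ?add0r.
rewrite IH.
  by apply: HG => m _; rewrite /upd; case: eqP => // ->.
move=> b b' H; apply: HG => m; rewrite ltnS leq_eqVlt => /orP[/eqP ->|mn].
  by rewrite !upd_n.
by rewrite !upd_lt // H.
Qed.

Lemma Sm_ge0 n (F : (nat -> bool) -> R) : (forall b, 0 <= F b) -> 0 <= Sm n F.
Proof.
elim: n F => [|n IH] F H /=; first exact: H.
by apply: IH => b; apply: addr_ge0.
Qed.

End Sm2.

Section Link.
Variables (d : measure_display) (T : measurableType d) (R : realType).
Variables (P : probability T R) (U : nat -> T -> R) (omega : int -> nat -> R).
Hypothesis Hom : in_Omega_plus omega.
Hypothesis HU : iid_uniform P U.
Variable x : int.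

Notation om := (om omega x).

Definition ct (t : T) : nat -> bool := cu omega x (fun m => U m t).
Definition Evt n b : set T := [set t | agr n b (ct t)].
Definition Bs b i : set R :=
  if b i then `]-oo, om i b[%classic else `[om i b, +oo[%classic.

Lemma Bs_meas b i : measurable (Bs b i).
Proof. by rewrite /Bs; case: (b i) => /=; exact: measurable_itv. Qed.

Lemma in_Bs b i y : Bs b i y <-> (y < om i b) = b i.
Proof.
rewrite /Bs; case: (b i) => /=; rewrite in_itv /= ?andbT.
  by split => [->|->].
by rewrite leNgt; split => [/negbTE ->|/negbT].
Qed.

Lemma E_iff (u : nat -> R) n b : (forall m, (m < n)%N -> cu omega x u m = b m) <->
  (forall m, (m < n)%N -> (u m < om m b) = b m).
Proof.
elim: n => [|n IH]; first by split.
have key : (forall m, (m < n)%N -> cu omega x u m = b m) -> cu omega x u n = (u n < om n b).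
  move=> H; rewrite /cu /om (hist_cu Hom) (hist_dep Hom x H) //.
split => H.
  have Hn : forall m, (m < n)%N -> cu omega x u m = b m by move=> m mn; apply: H; apply: ltnW.
  move=> m; rewrite ltnS leq_eqVlt => /orP[/eqP ->|mn].
    by rewrite -key // H.
  by apply/(proj1 IH Hn).
have Hn : forall m, (m < n)%N -> cu omega x u m = b m.
  by apply/IH => m mn; apply: H; apply: ltnW.
move=> m; rewrite ltnS leq_eqVlt => /orP[/eqP ->|mn].
  by rewrite key // H.
exact: Hn.
Qed.

Lemma Evt_cap n b : Evt n b = \bigcap_(i in [set` iota 0 n]) (U i @^-1` Bs b i).
Proof.
apply/seteqP; split => t /=.
  move=> /agrP H i; rewrite /= mem_iota add0n => /andP[_ i_n]; apply/in_Bs.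
  by apply: (proj1 (E_iff (fun m => U m t) n b)) => // m mn; rewrite H.
move=> H; apply/agrP => m mn; symmetry.
apply: (proj2 (E_iff (fun m => U m t) n b)) => // j jn.
by apply/in_Bs; apply: H; rewrite /= mem_iota add0n jn.
Qed.

Lemma pre_meas i (B : set R) : measurable B -> measurable (U i @^-1` B).
Proof.
move=> mB; case: HU => HU1 _ _.
by have := HU1 i measurableT B mB; rewrite setTI.
Qed.

Lemma Evt_meas n b : measurable (Evt n b).
Proof.
rewrite Evt_cap; case: n => [|n].
  have -> : \bigcap_(i in [set` iota 0 0]) (U i @^-1` Bs b i) = setT.
    by apply/seteqP; split => // t _ i.
  exact: measurableT.
apply: bigcap_measurable.
  by exists 0%N; rewrite /= inE.
by move=> i _; apply: pre_meas; apply: Bs_meas.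
Qed.

Lemma P_le a i : 0 <= a <= 1 -> P (U i @^-1` [set y | y <= a]) = a%:E.
Proof. by case: HU => _ H2 _ /H2 ->. Qed.

Lemma P_lt a i : 0 <= a <= 1 -> P (U i @^-1` `]-oo, a[%classic) = a%:E.
Proof.
move=> /andP[a0 a1].
have mlt : measurable (U i @^-1` `]-oo, a[%classic) by apply: pre_meas; exact: measurable_itv.
have mle e : measurable (U i @^-1` [set y | y <= e]).
  apply: pre_meas.
  have -> : [set y : R | y <= e] = `]-oo, e]%classic.
    by apply/seteqP; split => y /=; rewrite in_itv.
  exact: measurable_itv.
have up : (P (U i @^-1` `]-oo, a[%classic) <= a%:E)%E.
  rewrite -(P_le i (a:=a)) ?a0 ?a1 //; apply: le_measure; rewrite ?inE //.
  by move=> t /=; rewrite in_itv /= => /ltW.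
have lo e : 0 < e -> e <= a -> ((a - e)%:E <= P (U i @^-1` `]-oo, a[%classic))%E.
  move=> e0 ea; rewrite -(P_le i (a := a - e)); last by apply/andP; split; lra.
  apply: le_measure; rewrite ?inE //.
  by move=> t /=; rewrite in_itv /= => h; lra.
have p0 : (0 <= P (U i @^-1` `]-oo, a[%classic))%E by apply: measure_ge0.
move: up lo p0; case: (P _) => [r| |] //= up lo p0.
congr (_%:E); apply/eqP; rewrite eq_le; rewrite lee_fin in up; rewrite up /=.
rewrite lee_fin in p0.
apply/ler_addgt0Pr => e e0; case: (leP e a) => ea.
  by have := lo e e0 ea; rewrite lee_fin; lra.
lra.
Qed.

Lemma P_ge a i : 0 <= a <= 1 -> P (U i @^-1` `[a, +oo[%classic) = (1 - a)%:E.
Proof.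
move=> ha.
have -> : U i @^-1` `[a, +oo[%classic = ~` (U i @^-1` `]-oo, a[%classic).
  apply/seteqP; split => t /=; rewrite !in_itv /= ?andbT.
    by move=> h1 h2; move: h1; rewrite leNgt h2.
  by move/negP; rewrite -leNgt.
rewrite probability_setC; last by apply: pre_meas; exact: measurable_itv.
by rewrite P_lt // EFinB.
Qed.

Lemma P_Bs b i : P (U i @^-1` Bs b i) = (stepw omega x i b (b i))%:E.
Proof.
have /andP[h1 h2] := om_range Hom x i b.
have ha : 0 <= om i b <= 1 by apply/andP; split => //; apply: le_trans h1; rewrite invr_ge0 ler0n.
rewrite /Bs /stepw; case: (b i).
  exact: P_lt.
exact: P_ge.
Qed.

Lemma P_Evt n b : P (Evt n b) = (w omega x n b)%:E.
Proof.
rewrite Evt_cap; case: HU => _ _ H3.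
rewrite H3 ?iota_uniq //; last by move=> i; apply: Bs_meas.
rewrite (eq_bigr (fun i => (stepw omega x i b (b i))%:E)); last by move=> i _; apply: P_Bs.
by rewrite prodEFin /w /index_iota subn0.
Qed.

End Link.

Section Link2.
Variables (d : measure_display) (T : measurableType d) (R : realType).
Variables (P : probability T R) (U : nat -> T -> R) (omega : int -> nat -> R).
Hypothesis Hom : in_Omega_plus omega.
Hypothesis HU : iid_uniform P U.
Variable x : int.

Lemma meas_Sm n (G : (nat -> bool) -> T -> R) : (forall b, measurable_fun setT (G b)) ->
  measurable_fun setT (fun t => Sm n (fun b => G b t)).
Proof.
elim: n G => [|n IH] G HG /=; first exact: HG.
apply: (IH (fun b t => G (upd b n true) t + G (upd b n false) t)) => b.
exact: measurable_realfun.measurable_funD.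
Qed.

Lemma int_Sm n (G : (nat -> bool) -> T -> R) (g : (nat -> bool) -> R) :
  (forall b, measurable_fun setT (G b)) -> (forall b t, 0 <= G b t) ->
  (forall b, (\int[P]_t (G b t)%:E)%E = (g b)%:E) ->
  (\int[P]_t (Sm n (fun b => G b t))%:E)%E = (Sm n g)%:E.
Proof.
elim: n G g => [|n IH] G g HG G0 Hg /=; first exact: Hg.
apply: (IH (fun b t => G (upd b n true) t + G (upd b n false) t)
           (fun b => g (upd b n true) + g (upd b n false))).
- move=> b; exact: measurable_realfun.measurable_funD.
- by move=> b t; apply: addr_ge0.
move=> b.
have -> : (fun t => (G (upd b n true) t + G (upd b n false) t)%:E) =
          (fun t => (G (upd b n true) t)%:E + (G (upd b n false) t)%:E)%E.
  by apply: funext => t; rewrite EFinD.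
rewrite ge0_integralD //.
- by rewrite !Hg EFinD.
- by move=> t _; rewrite lee_fin.
- by apply/measurable_realfun.measurable_EFinP.
- by move=> t _; rewrite lee_fin.
- by apply/measurable_realfun.measurable_EFinP.
Qed.

Lemma F_Sm n (F : (nat -> bool) -> R) : depn n F ->
  (fun t => F (ct U omega x t)) =
  (fun t => Sm n (fun b => F b * \1_(Evt U omega x n b) t)).
Proof.
move=> HF; apply: funext => t; rewrite -(Sm_indic (ct U omega x t) HF).
apply: Sm_ext => b; congr (_ * _).
have e : (t \in Evt U omega x n b) = agr n b (ct U omega x t).
  by apply/idP/idP => [/set_mem //|h]; apply: mem_set.
by rewrite indicE e.
Qed.

Lemma link_meas n (F : (nat -> bool) -> R) : depn n F ->
  measurable_fun setT (fun t => F (ct U omega x t)).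
Proof.
move=> HF; rewrite (F_Sm HF); apply: meas_Sm => b.
apply: measurable_realfun.measurable_funM; first exact: measurable_cst.
apply: measurable_realfun.measurable_indic; exact: (Evt_meas Hom HU).
Qed.

Lemma link n (F : (nat -> bool) -> R) : depn n F -> (forall b, 0 <= F b) ->
  (\int[P]_t (F (ct U omega x t))%:E)%E = (Ex omega x n F)%:E.
Proof.
move=> HF F0.
have -> : (fun t => (F (ct U omega x t))%:E) =
  (fun t => (Sm n (fun b => F b * \1_(Evt U omega x n b) t))%:E).
  by apply: funext => t; rewrite (congr1 (fun f => f t) (F_Sm HF)).
rewrite (@int_Sm n (fun b t => F b * \1_(Evt U omega x n b) t) (fun b => F b * w omega x n b)).
- by congr (_%:E); apply: Sm_ext => b; rewrite mulrC.
- move=> b; apply: measurable_realfun.measurable_funM; first exact: measurable_cst.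
  apply: measurable_realfun.measurable_indic; exact: (Evt_meas Hom HU).
- by move=> b t; apply: mulr_ge0 => //; rewrite /indic ler0n.
move=> b.
have -> : (fun t => (F b * \1_(Evt U omega x n b) t)%:E) =
          (fun t => (F b)%:E * (\1_(Evt U omega x n b) t)%:E)%E.
  by apply: funext => t; rewrite EFinM.
rewrite ge0_integralZl_EFin //.
- rewrite integral_indic //; last exact: (Evt_meas Hom HU).
  rewrite setIT.
  by rewrite EFinM; congr (_ * _)%E; exact: (P_Evt Hom HU x n b).
- apply/measurable_realfun.measurable_EFinP.
  apply: measurable_realfun.measurable_indic; exact: (Evt_meas Hom HU).
Qed.

End Link2.

Lemma extract (R : realType) (f : nat -> R) :
  (0 < limn_einf (fun i : nat => (i%:R^-1 * f i)%:E))%E ->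
  exists c, 0 < c /\ exists I, forall i, (I <= i)%N -> c * i%:R <= f i.
Proof.
set u := fun i : nat => (i%:R^-1 * f i)%:E.
rewrite limn_einf_lim (cvg_lim _ (@cvg_einfs_sup _ u)) // => H.
have [y [n _ <-] hy] := ereal_sup_gt H.
have lb : forall i, (n <= i)%N -> (einfs u n <= u i)%E.
  by move=> i ni; apply: ereal_inf_lbound; exists i.
move: hy lb; case: (einfs u n) => [r| |] //= hy lb.
  rewrite lte_fin in hy; exists (r / 2); split; first by rewrite divr_gt0.
  exists (maxn n 1) => i; rewrite geq_max => /andP[ni i1].
  have := lb i ni; rewrite /u lee_fin => h.
  have i0 : (0 : R) < i%:R by rewrite ltr0n.
  rewrite ler_pdivlMl // in h.
  have : r / 2 * i%:R <= r * i%:R by rewrite ler_pM2r // ler_pdivrMr //; lra.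
  lra.
exists 1; split => //; exists n => i ni.
by have := lb i ni; rewrite /u leye_eq.
Qed.

Lemma Dhit_lim (R : realType) (omega : int -> nat -> R) (Hom : in_Omega_plus omega)
  (X : nat -> int) (k : int) :
  D_at_hit omega X k = limn (fun n => (Dtot omega X (hitn X k n))%:E).
Proof.
have nd : {homo (fun n => (Dtot omega X (hitn X k n))%:E) : n m / (n <= m)%N >-> (n <= m)%E}.
  by move=> n m nm; rewrite lee_fin; apply: (Dtot_mono Hom); apply: hitn_mono.
rewrite (cvg_lim _ (ereal_nondecreasing_cvgn nd)) //.
rewrite /D_at_hit /hitting; case: pselect => [h|h].
  case: ex_minnP => m /eqP Xm mmin.
  have bef : forall j, (j < m)%N -> X j != k.
    move=> j jm; apply/negP => /eqP Xj.
    by have := mmin j (introT eqP Xj); rewrite leqNgt jm.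
  apply/le_anti/andP; split.
    apply: ereal_sup_ubound; exists m => //.
    by rewrite (hitn_min _ Xm bef) minnn.
  apply: ge_ereal_sup => _ [n _ <-].
  rewrite lee_fin (hitn_min _ Xm bef); apply: (Dtot_mono Hom); exact: geq_minl.
have -> : (fun n => (Dtot omega X (hitn X k n))%:E) = (fun n => (Dtot omega X n)%:E).
  apply: funext => n; rewrite hitn_full // => m _; apply/negP => /eqP Xm; apply: h; exists m; exact/eqP.
by [].
Qed.

Unset Implicit Arguments.

Theorem mainTheorem2 (d : measure_display) (T : measurableType d) (R : realType)
  (P : probability T R) (U : nat -> T -> R) (omega : int -> nat -> R) :
  in_Omega_plus omega ->
  iid_uniform P U ->
  (0 < limn_einf (fun i : nat =>
      (i%:R^-1 * \sum_(0 <= j < i.+1) (2 * omega (- (j%:Z)) 1%N - 1))%:E))%E ->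
  forall x k : int, x <= k ->
  (\int[P]_t D_at_hit omega (walk omega x (fun n => U n t)) k)%E = ((k - x)%:~R)%:E.
Proof.
move=> Hom HU Hlim x k xk.
have [c [c0 [I Hc]]] := extract Hlim.
have eq1 : (fun t => D_at_hit omega (walk omega x (fun n => U n t)) k) =
           (fun t => limn (fun n => (Dn omega x k n (ct U omega x t))%:E)).
  by apply: funext => t; rewrite (walk_cu Hom) (Dhit_lim Hom).
rewrite eq1.
rewrite (@monotone_convergence _ _ _ P setT measurableT
   (fun n t => (Dn omega x k n (ct U omega x t))%:E)); last 3 first.
- move=> n; apply/measurable_realfun.measurable_EFinP.
  exact: (link_meas Hom HU x (@Dn_dep _ _ Hom x k n)).
- by move=> n t _; rewrite lee_fin; apply: Dn_ge0.
- by move=> t _ n m nm; rewrite lee_fin; apply: (Dn_mono Hom).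
have -> : (fun n => \int[P]_t (Dn omega x k n (ct U omega x t))%:E)%E =
          (fun n => (an omega x k n)%:E).
  apply: funext => n; rewrite (link Hom HU x (@Dn_dep _ _ Hom x k n)) //.
  by move=> b; apply: Dn_ge0.
have nd : {homo (fun n => (an omega x k n)%:E) : n m / (n <= m)%N >-> (n <= m)%E}.
  by move=> n m nm; rewrite lee_fin; apply: (an_mono Hom).
rewrite (cvg_lim _ (ereal_nondecreasing_cvgn nd)) //.
apply/le_anti/andP; split.
  by apply: ge_ereal_sup => _ [n _ <-]; rewrite lee_fin; apply: (an_le Hom).
apply/lee_addgt0Pr => e e0.
have [n hn] := en_small Hom xk c0 Hc e0.
apply: (@le_trans _ _ ((an omega x k n)%:E + e%:E)%E).
  rewrite -EFinD lee_fin; have := an_en Hom x k n; lra.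
by rewrite leeD2r //; apply: ereal_sup_ubound; exists n.
Qed.
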